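(* Under the hypotheses (i)–(iv) below, for $0<\delta<1$ let $$(x^*(\delta),z^*(\delta))=\operatorname*{argmax}_{x}\operatorname*{argmin}_{\|z\|_\infty\le\ell_F}\Big\{V(\theta;z)+\delta\nabla_\theta V(\theta;z)^\top x-F^*(z)-\tfrac{\delta}{2}\|x\|^2\Big\}.$$ Then $\|x^*(\delta)-\nabla_\theta R(\pi_\theta)\|^2=\mathcal O(\delta^2)$ as $\delta\to0_+$. Hypotheses: (i) $F:\mathbb{R}^{SA}\to\mathbb{R}$ is concave and differentiable everywhere with $\max\{\|\nabla F(\lambda)\|_\infty:\|\lambda\|_1\le\frac{2}{1-\gamma}\}\le\ell_F$; (ii) $\|\nabla F(\lambda)-\nabla F(\lambda')\|_\infty\le L_F\|\lambda-\lambda'\|_1$ for all $\lambda,\lambda'$; (iii) $F^*$ is $\ell_{F^*}$-Lipschitz w.r.t. $\|\cdot\|_\infty$ on $\{z:\|z\|_\infty\le2\ell_F,F^*(z)>-\infty\}$; (iv) $\pi_\theta$ is differentiable in $\theta$ with $\|\nabla_\theta\pi_\theta(\cdot|s)\|_{\infty,2}\le C$ for all $s$.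
   Context: Finite MDP with states $\mathcal S$ ($S=|\mathcal S|$), actions $\mathcal A$ ($A=|\mathcal A|$), initial distribution $\xi$, discount $\gamma\in(0,1)$. Policies $\pi_\theta$, $\theta\in\Theta\subset\mathbb{R}^d$; occupancy measure $\lambda(\theta)_{sa}=\sum_{t\ge0}\gamma^t\mathbb P(s_t=s,a_t=a\mid\pi_\theta,s_0\sim\xi)$; $R(\pi_\theta)=F(\lambda(\theta))$; $V(\theta;z)=\langle z,\lambda(\theta)\rangle$ for $z\in\mathbb{R}^{SA}$; Fenchel dual $F^*(z)=\inf_\lambda\{\langle\lambda,z\rangle-F(\lambda)\}$. $\nabla_\theta\pi_\theta(\cdot|s)=[\nabla_\theta\pi_\theta(1|s),\dots,\nabla_\theta\pi_\theta(A|s)]\in\mathbb{R}^{d\times A}$ and $\|B\|_{\infty,2}:=\max_{\|u\|_\infty\le1}\|Bu\|_2$. *)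

(* Defs.v *)
From HB Require Import structures.
From mathcomp Require Import all_boot all_order all_algebra.
From mathcomp Require Import all_classical all_reals.
From mathcomp Require Import ereal topology normedtype sequences derive.
Set Implicit Arguments. Unset Strict Implicit. Unset Printing Implicit Defensive.
Import Order.TTheory GRing.Theory Num.Theory.
Import numFieldNormedType.Exports.
Local Open Scope ring_scope.
Local Open Scope classical_set_scope.

(* States are 'I_nS, actions are 'I_nA (any finite set up to relabeling);
   vectors of R^{SA} are nS x nA matrices, parameters are row vectors 'rV_d. *)

Section Defs.
Variable R : realType.

Definition l1norm (nS nA : nat) (M : 'M[R]_(nS, nA)) : R :=
  \sum_(s < nS) \sum_(a < nA) `|M s a|.
Definition linfnorm (nS nA : nat) (M : 'M[R]_(nS, nA)) : R :=
  \big[Num.max/0]_(s < nS) \big[Num.max/0]_(a < nA) `|M s a|.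
Definition mxdot (nS nA : nat) (M N : 'M[R]_(nS, nA)) : R :=
  \sum_(s < nS) \sum_(a < nA) M s a * N s a.
Definition rvdot (d : nat) (x y : 'rV[R]_d) : R := \sum_(i < d) x 0 i * y 0 i.
Definition sqnorm2 (d : nat) (x : 'rV[R]_d) : R := rvdot x x.

Definition grad (d : nat) (f : 'rV[R]_d -> R) (th : 'rV[R]_d) : 'rV[R]_d :=
  \row_(i < d) derive f th (delta_mx 0 i).
Definition gradM (nS nA : nat) (F : 'M[R]_(nS, nA) -> R) (l : 'M[R]_(nS, nA))
  : 'M[R]_(nS, nA) :=
  \matrix_(s < nS, a < nA) derive F l (delta_mx s a).

Definition concave_fun (nS nA : nat) (F : 'M[R]_(nS, nA) -> R) : Prop :=
  forall (x y : 'M[R]_(nS, nA)) (t : R), 0 <= t <= 1 ->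
    t * F x + (1 - t) * F y <= F (t *: x + (1 - t) *: y).

Definition fenchel_dual (nS nA : nat) (F : 'M[R]_(nS, nA) -> R)
  (z : 'M[R]_(nS, nA)) : \bar R :=
  ereal_inf [set ((mxdot l z - F l)%:E) | l in [set: 'M[R]_(nS, nA)]].

Definition is_distr (n : nat) (p : 'I_n -> R) : Prop :=
  (forall i, 0 <= p i) /\ \sum_(i < n) p i = 1.

Fixpoint state_distr (nS nA : nat) (P : 'I_nS -> 'I_nA -> 'I_nS -> R)
  (xi : 'I_nS -> R) (pol : 'I_nS -> 'I_nA -> R) (t : nat) : 'I_nS -> R :=
  match t with
  | 0%N => xi
  | t'.+1 => fun s' => \sum_(s < nS) \sum_(a < nA)
       state_distr P xi pol t' s * pol s a * P s a s'
  end.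

(* occupancy measure lambda_{sa} = sum_t gamma^t P(s_t = s, a_t = a) *)
Definition occupancy (nS nA : nat) (P : 'I_nS -> 'I_nA -> 'I_nS -> R)
  (xi : 'I_nS -> R) (gamma : R) (pol : 'I_nS -> 'I_nA -> R) : 'M[R]_(nS, nA) :=
  \matrix_(s < nS, a < nA)
    limn (series (fun t : nat => gamma ^+ t * (state_distr P xi pol t s * pol s a))).

(* ||B||_{inf,2} <= C for B = [grad pi(1|s), ..., grad pi(A|s)] in R^{d x A}:
   max_{||u||_inf <= 1} ||B u||_2 <= C, written out *)
Definition opnorm_inf2_le (d nA : nat) (B : 'I_nA -> 'rV[R]_d) (C : R) : Prop :=
  forall u : 'I_nA -> R, (forall a, `|u a| <= 1) ->
    Num.sqrt (sqnorm2 (\sum_(a < nA) u a *: B a)) <= C.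

End Defs.

(* Main.v *)
Require Import Defs.
From HB Require Import structures.
From mathcomp Require Import all_boot all_order all_algebra.
From mathcomp Require Import all_classical all_reals.
From mathcomp Require Import ereal topology normedtype sequences derive.
From mathcomp Require Import ring lra.
Import Order.TTheory GRing.Theory Num.Theory.
Import numFieldNormedType.Exports.
Local Open Scope ring_scope.
Local Open Scope classical_set_scope.

Section Aux.
Context {R : realType} {nS nA d : nat}.
Implicit Types M N : 'M[R]_(nS, nA).
Implicit Types x y : 'rV[R]_d.

Lemma linf_ge0 M : 0 <= linfnorm M.
Proof.
rewrite /linfnorm; elim/big_ind: _ => //.
  by move=> a b ha hb; rewrite le_max ha.
move=> s _; elim/big_ind: _ => //.
by move=> a b ha hb; rewrite le_max ha.
Qed.

Lemma linf_ge M s a : `|M s a| <= linfnorm M.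
Proof.
rewrite /linfnorm.
apply: le_trans (le_bigmax _ (fun s => \big[Num.max/0]_(a0 < nA) `|M s a0|) s).
exact: (le_bigmax _ (fun a0 => `|M s a0|) a).
Qed.

Lemma linf_le M c : 0 <= c -> (forall s a, `|M s a| <= c) -> linfnorm M <= c.
Proof.
move=> c0 H; rewrite /linfnorm; apply: bigmax_le => // s _.
by apply: bigmax_le => // a _.
Qed.

Lemma l1_ge0 M : 0 <= l1norm M.
Proof. by apply: sumr_ge0 => s _; apply: sumr_ge0. Qed.

Lemma mxdot_le M N : `|mxdot M N| <= linfnorm M * l1norm N.
Proof.
rewrite /mxdot /l1norm mulr_sumr.
apply: le_trans (ler_norm_sum _ _ _) _; apply: ler_sum => s _.
rewrite mulr_sumr; apply: le_trans (ler_norm_sum _ _ _) _; apply: ler_sum => a _.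
by rewrite normrM ler_wpM2r // linf_ge.
Qed.

Lemma l1D M N : l1norm (M + N) <= l1norm M + l1norm N.
Proof.
rewrite /l1norm -big_split; apply: ler_sum => s _.
rewrite -big_split; apply: ler_sum => a _; rewrite mxE; exact: ler_normD.
Qed.

Lemma l1Z k M : l1norm (k *: M) = `|k| * l1norm M.
Proof.
rewrite /l1norm mulr_sumr; apply: eq_bigr => s _; rewrite mulr_sumr.
by apply: eq_bigr => a _; rewrite mxE normrM.
Qed.

Lemma l1N M : l1norm (- M) = l1norm M.
Proof.
by rewrite -scaleN1r l1Z normrN normr1 mul1r.
Qed.

Lemma mxdotC M N : mxdot M N = mxdot N M.
Proof. by apply: eq_bigr => s _; apply: eq_bigr => a _; rewrite mulrC. Qed.

Lemma mxdotDr M N N' : mxdot M (N + N') = mxdot M N + mxdot M N'.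
Proof.
rewrite /mxdot -big_split; apply: eq_bigr => s _; rewrite -big_split.
by apply: eq_bigr => a _; rewrite mxE mulrDr.
Qed.

Lemma mxdotZr M k N : mxdot M (k *: N) = k * mxdot M N.
Proof.
rewrite /mxdot mulr_sumr; apply: eq_bigr => s _; rewrite mulr_sumr.
by apply: eq_bigr => a _; rewrite mxE mulrCA.
Qed.

Lemma mxdotNr M N : mxdot M (- N) = - mxdot M N.
Proof. by rewrite -scaleN1r mxdotZr mulN1r. Qed.

Lemma mxdotBr M N N' : mxdot M (N - N') = mxdot M N - mxdot M N'.
Proof. by rewrite mxdotDr mxdotNr. Qed.

Lemma mxdotBl M M' N : mxdot (M - M') N = mxdot M N - mxdot M' N.
Proof. by rewrite mxdotC mxdotBr !(mxdotC N). Qed.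

Lemma mxdot_sumr (I : finType) M (f : I -> 'M[R]_(nS, nA)) :
  mxdot M (\sum_i f i) = \sum_i mxdot M (f i).
Proof.
rewrite /mxdot (eq_bigr (fun s => \sum_i \sum_a M s a * f i s a)).
  by rewrite exchange_big.
move=> s _; rewrite exchange_big; apply: eq_bigr => a _.
by rewrite summxE mulr_sumr.
Qed.

Lemma mxdot0r M : mxdot M 0 = 0.
Proof. by rewrite -(scale0r 0) mxdotZr mul0r. Qed.

Lemma rvdotC x y : rvdot x y = rvdot y x.
Proof. by apply: eq_bigr => i _; rewrite mulrC. Qed.

Lemma rvdotDl x x' y : rvdot (x + x') y = rvdot x y + rvdot x' y.
Proof. by rewrite /rvdot -big_split; apply: eq_bigr => i _; rewrite mxE mulrDl. Qed.

Lemma rvdotZl k x y : rvdot (k *: x) y = k * rvdot x y.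
Proof. by rewrite /rvdot mulr_sumr; apply: eq_bigr => i _; rewrite mxE mulrA. Qed.

Lemma rvdotNl x y : rvdot (- x) y = - rvdot x y.
Proof. by rewrite -scaleN1r rvdotZl mulN1r. Qed.

Lemma rvdotDr x y y' : rvdot x (y + y') = rvdot x y + rvdot x y'.
Proof. by rewrite rvdotC rvdotDl !(rvdotC x). Qed.
Lemma rvdotNr x y : rvdot x (- y) = - rvdot x y.
Proof. by rewrite rvdotC rvdotNl rvdotC. Qed.

Lemma sq_ge0 x : 0 <= sqnorm2 x.
Proof. by apply: sumr_ge0 => i _; rewrite -expr2 sqr_ge0. Qed.

Lemma sqD x y : sqnorm2 (x + y) = sqnorm2 x + 2 * rvdot x y + sqnorm2 y.
Proof.
rewrite /sqnorm2 rvdotDl !rvdotDr (rvdotC y x); ring.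
Qed.

Lemma sqB x y : sqnorm2 (x - y) = sqnorm2 x - 2 * rvdot x y + sqnorm2 y.
Proof.
rewrite /sqnorm2 rvdotDl !rvdotDr !rvdotNl !rvdotNr (rvdotC y x); ring.
Qed.

Lemma sqN x : sqnorm2 (- x) = sqnorm2 x.
Proof. by rewrite /sqnorm2 rvdotNl rvdotNr opprK. Qed.

Lemma sqD_le x y : sqnorm2 (x + y) <= 2 * sqnorm2 x + 2 * sqnorm2 y.
Proof.
have := sq_ge0 (x - y); rewrite sqB sqD; lra.
Qed.

End Aux.


Section FLemmas.
Context {R : realType} {nS nA : nat}.
Implicit Types M N l m h : 'M[R]_(nS, nA).

Lemma gradM_dot (F : 'M[R]_(nS, nA) -> R) l h :
  differentiable F l -> 'd F l h = mxdot (gradM F l) h.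
Proof.
move=> dF; rewrite {1}(matrix_sum_delta h) linear_sum /mxdot.
apply: eq_bigr => s _; rewrite linear_sum; apply: eq_bigr => a _.
by rewrite linearZ /= mxE deriveE // mulrC.
Qed.

Lemma line_is_derive (f : 'M[R]_(nS, nA) -> R) m h (t : R) :
  differentiable f (t *: h + m) ->
  is_derive t (1:R) (fun s => f (s *: h + m)) ('d f (t *: h + m) h).
Proof.
move=> df.
have E : (fun s : R => s^-1 *: (((fun s => f (s *: h + m)) \o shift t) (s *: 1)
             - f (t *: h + m))) =
         (fun s : R => s^-1 *: ((f \o shift (t *: h + m)) (s *: h) - f (t *: h + m))).
  apply: funext => s /=; congr (_ *: (f _ - _)).
  by rewrite [s *: 1]mulr1 scalerDl addrA.
apply: DeriveDef.
  rewrite /derivable E; exact: (@diff_derivable _ _ _ _ _ h df).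
by rewrite /derive E -/(derive f (t *: h + m) h) deriveE.
Qed.


Lemma concave_grad (F : 'M[R]_(nS, nA) -> R) m l :
  concave_fun F -> differentiable F m ->
  F l <= F m + mxdot (gradM F m) (l - m).
Proof.
move=> cF dF.
set v := l - m.
have hD : (fun s : R => s^-1 *: ((F \o shift m) (s *: v) - F m)) @ 0^' --> 'D_v F m.
  exact: (@diff_derivable _ _ _ _ _ v dF).
have hR := cvg_dnbhs_at_right hD.
rewrite -gradM_dot // -deriveE //.
suff : F l - F m <= 'D_v F m by lra.
apply: (cvgr_to_ge hR).
near=> s.
have s0 : 0 < s by near: s; exact: nbhs_right_gt.
have s1 : s < 1 by near: s; exact: nbhs_right_lt.
rewrite /=.
have := cF l m s; rewrite (ltW s0) (ltW s1) => /(_ isT).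
have -> : s *: l + (1 - s) *: m = s *: v + m.
  by apply/matrixP => i j; rewrite /v !mxE; ring.
move=> key.
have key2 : s * (F l - F m) <= F (s *: v + m) - F m by lra.
by rewrite -[s^-1 *: _]/(s^-1 * _) ler_pdivlMl.
Unshelve. all: by end_near.
Qed.

Lemma lipschitz_lower (F : 'M[R]_(nS, nA) -> R) (LF : R) m h :
  (forall l, differentiable F l) ->
  (forall l l', linfnorm (gradM F l - gradM F l') <= LF * l1norm (l - l')) ->
  F m + mxdot (gradM F m) h - `|LF| * l1norm h ^+ 2 <= F (h + m).
Proof.
move=> dF hL.
have hder : forall t : R, t \in `]0, 1[%R ->
    is_derive t (1:R) (fun s => F (s *: h + m)) (mxdot (gradM F (t *: h + m)) h).
  move=> t _; rewrite -gradM_dot //; exact: line_is_derive.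
have hcont : {within `[0, 1], continuous (fun s : R => F (s *: h + m))}.
  apply: continuous_subspaceT => t.
  apply: differentiable_continuous; apply/derivable1_diffP.
  by have [] := @line_is_derive F m h t (dF _).
have [c cI E] := MVT ltr01 hder hcont.
have /andP[c0 c1] : (0 < c) && (c < 1) by rewrite in_itv /= in cI.
move: E; rewrite scale1r scale0r add0r subr0 mulr1 => E.
have : mxdot (gradM F (c *: h + m) - gradM F m) h >= - (`|LF| * l1norm h ^+ 2).
  rewrite lerNl; apply: le_trans (ler_norm _) _; rewrite normrN.
  apply: le_trans (mxdot_le _ _) _.
  rewrite expr2 mulrA; apply: ler_wpM2r; first exact: l1_ge0.
  apply: le_trans (hL _ _) _.
  rewrite addrK l1Z.
  rewrite [`|c|]ger0_norm; last exact: ltW.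
  apply: le_trans (ler_norm _) _; rewrite normrM; apply: ler_wpM2l => //.
  rewrite ger0_norm; last by apply: mulr_ge0; [exact: ltW|exact: l1_ge0].
  by rewrite ler_piMl ?l1_ge0 ?ltW.
rewrite mxdotBl => H; lra.
Qed.

Lemma dual_le (F : 'M[R]_(nS, nA) -> R) z l :
  (fenchel_dual F z <= (mxdot l z - F l)%:E)%E.
Proof. by apply: ereal_inf_lbound; exists l. Qed.

Lemma dual_eq (F : 'M[R]_(nS, nA) -> R) m :
  concave_fun F -> differentiable F m ->
  fenchel_dual F (gradM F m) = (mxdot m (gradM F m) - F m)%:E.
Proof.
move=> cF dF; apply/eqP; rewrite eq_le; apply/andP; split; first exact: dual_le.
apply: le_ereal_inf_tmp => _ [l _ <-]; rewrite lee_fin.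
have := concave_grad F m l cF dF; rewrite mxdotBr (mxdotC (gradM F m) l) (mxdotC (gradM F m) m).
lra.
Qed.

End FLemmas.


Section Occ.
Context {R : realType} {nS nA : nat}.
Variable (P : 'I_nS -> 'I_nA -> 'I_nS -> R) (xi : 'I_nS -> R) (gamma : R).

Definition Mt (p : 'I_nS -> 'I_nA -> R) : 'M[R]_nS :=
  \matrix_(s, s') \sum_(a < nA) p s a * P s a s'.
Definition Amat p : 'M[R]_nS := 1%:M - gamma *: Mt p.
Definition xirow : 'rV[R]_nS := \row_s xi s.
Definition drow p t : 'rV[R]_nS := \row_s state_distr P xi p t s.
Definition Sn p n : 'rV[R]_nS := \sum_(t < n) gamma ^+ t *: drow p t.
Definition dvec p : 'rV[R]_nS := xirow *m invmx (Amat p).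

Lemma drowS p t : drow p t.+1 = drow p t *m Mt p.
Proof.
apply/matrixP => i s'; rewrite !mxE /=; apply: eq_bigr => s _.
rewrite !mxE mulr_sumr; apply: eq_bigr => a _; by rewrite mulrA.
Qed.

Lemma drow0 p : drow p 0 = xirow.
Proof. by apply/matrixP => i s; rewrite !mxE. Qed.

Lemma Sn_eq p n : Sn p n *m Amat p = xirow - gamma ^+ n *: drow p n.
Proof.
elim: n => [|n IH].
  by rewrite /Sn big_ord0 mul0mx expr0 scale1r drow0 subrr.
rewrite /Sn big_ord_recr /= -/(Sn p n) mulmxDl IH drowS /Amat.
rewrite mulmxBr mulmx1 -scalemxAl -scalemxAr.
set Y := drow p n *m Mt p; set X := drow p n.
by apply/matrixP => i j; rewrite !mxE exprSr; ring.
Qed.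

Hypothesis Pd : forall s a, is_distr (P s a).
Hypothesis xid : is_distr xi.
Hypothesis g01 : 0 < gamma < 1.

Section Pol.
Variable p : 'I_nS -> 'I_nA -> R.
Hypothesis pd : forall s, is_distr (p s).

Lemma state_distr_distr t : is_distr (state_distr P xi p t).
Proof.
elim: t => [|t [IH0 IH1]] //=; split.
  move=> s'; apply: sumr_ge0 => s _; apply: sumr_ge0 => a _.
  by rewrite !mulr_ge0 //; [case: (pd s)|case: (Pd s a)].
rewrite exchange_big /= -IH1; apply: eq_bigr => s _.
rewrite exchange_big /=.
rewrite (eq_bigr (fun a => state_distr P xi p t s * p s a)).
  by rewrite -mulr_sumr; case: (pd s) => _ ->; rewrite mulr1.
by move=> a _; rewrite -mulr_sumr; case: (Pd s a) => _ ->; rewrite mulr1.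
Qed.

Lemma Mt_ge0 s s' : 0 <= Mt p s s'.
Proof.
rewrite mxE; apply: sumr_ge0 => a _.
by rewrite mulr_ge0 //; [case: (pd s)|case: (Pd s a)].
Qed.

Lemma Mt_row s : \sum_s' Mt p s s' = 1.
Proof.
under eq_bigr do rewrite mxE.
rewrite exchange_big /=; case: (pd s) => _ <-; apply: eq_bigr => a _.
by rewrite -mulr_sumr; case: (Pd s a) => _ ->; rewrite mulr1.
Qed.

Lemma Amat_unit : Amat p \in unitmx.
Proof.
rewrite unitmxE unitfE; apply/negP => /det0P [v vn0].
rewrite /Amat mulmxBr mulmx1 -scalemxAr => /eqP; rewrite subr_eq0 => /eqP vE.
have hle : \sum_s `|v 0 s| <= gamma * \sum_s `|v 0 s|.
  have g0 : 0 <= gamma by case/andP: g01 => /ltW.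
  rewrite {1}vE.
  under eq_bigr do rewrite mxE normrM (ger0_norm g0).
  rewrite -mulr_sumr ler_wpM2l //.
  under eq_bigr do rewrite mxE.
  apply: le_trans (ler_sum _ (fun s' _ => ler_norm_sum _ _ _)) _.
  rewrite exchange_big /=; apply: ler_sum => s _.
  under eq_bigr do rewrite normrM (ger0_norm (Mt_ge0 _ _)).
  by rewrite -mulr_sumr Mt_row mulr1.
have h0 : \sum_s `|v 0 s| <= 0.
  have := sumr_ge0 (index_enum _) (fun s _ => normr_ge0 (v 0 s)).
  case/andP: g01 => g0 g1; nra.
move/negP: vn0; apply; apply/eqP/matrixP => i s; rewrite ord1 mxE.
have H : \sum_s `|v 0 s| = 0.
  by apply/eqP; rewrite eq_le h0 sumr_ge0.
by apply/normr0_eq0; apply: (psumr_eq0P _ H).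
Qed.


Lemma dk_le1 t k : state_distr P xi p t k <= 1.
Proof.
have [h0 h1] := state_distr_distr t.
by rewrite -h1 (bigD1 k) //= lerDl sumr_ge0.
Qed.

Lemma Sn_cvg s : (fun n => Sn p n 0 s) @ \oo --> dvec p 0 s.
Proof.
have uA := Amat_unit.
have Sform n : Sn p n = dvec p - gamma ^+ n *: (drow p n *m invmx (Amat p)).
  by rewrite /dvec -(mulmxK uA (Sn p n)) Sn_eq mulmxBl scalemxAl.
have -> : (fun n => Sn p n 0 s) =
    (fun n => (dvec p 0 s - gamma ^+ n * (drow p n *m invmx (Amat p)) 0 s)).
  by apply/funext => n; rewrite Sform !mxE.
rewrite -[X in _ --> X]subr0; apply: cvgB; first exact: cvg_cst.
set B := \sum_k `|invmx (Amat p) k s|.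
have g0 : 0 <= gamma by case/andP: g01 => /ltW.
have gB : (fun n : nat => gamma ^+ n * B) @ \oo --> 0.
  rewrite -(mul0r B); apply: cvgMr_tmp; apply: cvg_expr.
  by rewrite ger0_norm //; case/andP: g01.
apply: (squeeze_cvgr (f := fun n : nat => - (gamma ^+ n * B)) (h := fun n : nat => gamma ^+ n * B)).
- apply: nearW => n; rewrite -ler_norml normrM ger0_norm ?exprn_ge0 //.
  apply: ler_wpM2l; first exact: exprn_ge0.
  rewrite mxE; apply: le_trans (ler_norm_sum _ _ _) _; apply: ler_sum => k _.
  rewrite normrM mxE; apply: ler_piMl => //.
  have [h0 _] := state_distr_distr n.
  by rewrite ger0_norm ?h0 // dk_le1.
- by rewrite -oppr0; apply: cvgN.
- exact: gB.
Qed.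

Lemma occ_closed s a :
  occupancy P xi gamma p s a = dvec p 0 s * p s a.
Proof.
rewrite mxE.
have -> : series (fun t => gamma ^+ t * (state_distr P xi p t s * p s a))
          = (fun n => Sn p n 0 s * p s a).
  apply/funext => n; rewrite /series /= big_mkord /Sn summxE mulr_suml.
  by apply: eq_bigr => t _; rewrite !mxE mulrA.
apply: cvg_lim => //.
by apply: cvgMr_tmp; apply: Sn_cvg.
Qed.

Lemma dvec_ge0 s : 0 <= dvec p 0 s.
Proof.
apply: (cvgr_to_ge (Sn_cvg s)); apply: nearW => n.
rewrite /Sn summxE; apply: sumr_ge0 => t _; rewrite !mxE.
have [h0 _] := state_distr_distr t.
by rewrite mulr_ge0 ?exprn_ge0 //; case/andP: g01 => /ltW.
Qed.

Lemma dvec_sum : \sum_s dvec p 0 s = (1 - gamma)^-1.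
Proof.
have uA := Amat_unit.
have E : dvec p *m Amat p = xirow by rewrite /dvec mulmxKV.
set D := dvec p; set M := Mt p.
have E' : D - gamma *: (D *m M) = xirow.
  by rewrite scalemxAr -[D in D - _]mulmx1 -mulmxBr E.
have hr : forall s, \sum_s' M s s' = 1 := Mt_row.
clearbody D M.
have : \sum_s' (D - gamma *: (D *m M)) 0 s' = 1.
  by rewrite E'; under eq_bigr do rewrite mxE; case: xid.
under eq_bigr do rewrite !mxE.
rewrite sumrB -mulr_sumr exchange_big /=.
under [X in _ - _ * X = _]eq_bigr do rewrite -mulr_sumr hr mulr1.
move=> h; case/andP: g01 => g0 g1.
have g1' : 1 - gamma != 0 by rewrite subr_eq0 gt_eqF.
apply: (mulfI g1'); rewrite divff //; lra.
Qed.

Lemma occ_l1 : l1norm (occupancy P xi gamma p) = (1 - gamma)^-1.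
Proof.
rewrite -dvec_sum /l1norm; apply: eq_bigr => s _.
under eq_bigr do rewrite occ_closed normrM (ger0_norm (dvec_ge0 _)).
rewrite -mulr_sumr.
have [h0 h1] := pd s.
rewrite (eq_bigr (fun a => p s a)); first by rewrite h1 mulr1.
by move=> a _; rewrite ger0_norm.
Qed.

End Pol.
End Occ.


Section DerGen.
Context {R : realType} {V : normedModType R}.

Lemma is_derive_bsum (I : Type) (r : seq I) (Pr : pred I) (f : I -> V -> R)
  (df : I -> R) (x v : V) :
  (forall i, is_derive x v (f i) (df i)) ->
  is_derive x v (fun t => \sum_(i <- r | Pr i) f i t) (\sum_(i <- r | Pr i) df i).
Proof.
move=> H; elim: r => [|i r IH].
  rewrite big_nil; under eq_fun do rewrite big_nil.
  exact: is_derive_cst.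
rewrite big_cons; under eq_fun do rewrite big_cons.
case: (Pr i) => //.
exact: (@is_deriveD _ _ _ (f i) (fun t => \sum_(j <- r | Pr j) f j t)).
Qed.

Lemma derivable_bsum (I : Type) (r : seq I) (Pr : pred I) (f : I -> V -> R) (x v : V) :
  (forall i, derivable (f i) x v) ->
  derivable (fun t => \sum_(i <- r | Pr i) f i t) x v.
Proof.
move=> H.
have H' : forall i, is_derive x v (f i) ('D_v (f i) x) by move=> i; apply: derivableP.
by case: (@is_derive_bsum I r Pr f _ x v H').
Qed.

Lemma derivable_bprod (I : Type) (r : seq I) (Pr : pred I) (f : I -> V -> R) (x v : V) :
  (forall i, derivable (f i) x v) ->
  derivable (fun t => \prod_(i <- r | Pr i) f i t) x v.
Proof.
move=> H; elim: r => [|i r IH].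
  under eq_fun do rewrite big_nil.
  exact: derivable_cst.
under eq_fun do rewrite big_cons.
case: (Pr i) => //.
exact: (@derivableM _ _ (f i) (fun t => \prod_(j <- r | Pr j) f j t)).
Qed.

Lemma derivable_cstM (c : R) (f : V -> R) (x v : V) :
  derivable f x v -> derivable (fun t => c * f t) x v.
Proof.
move=> H; exact: (@derivableM _ _ (fun _ => c) f _ _ (derivable_cst _ _ _) H).
Qed.

Lemma is_derive_cstM (c : R) (f : V -> R) (x v : V) (df : R) :
  is_derive x v f df -> is_derive x v (fun t => c * f t) (c * df).
Proof.
move=> [hf hd]; apply: DeriveDef; first exact: derivable_cstM.
have -> : (fun t => c * f t) = (fun _ => c) * f by apply/funext.
have dc : derivable (fun _ : V => c) x v by exact: derivable_cst.
by rewrite deriveM // derive_cst hd scaler0 addr0.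
Qed.

Lemma derivable_det n (M : V -> 'M[R]_n) (x v : V) :
  (forall i j, derivable (fun t => M t i j) x v) ->
  derivable (fun t => \det (M t)) x v.
Proof.
move=> H; rewrite /determinant.
apply: derivable_bsum => s; apply: derivable_cstM.
by apply: derivable_bprod => i.
Qed.

Lemma derivable_adj n (M : V -> 'M[R]_n) (x v : V) i j :
  (forall i j, derivable (fun t => M t i j) x v) ->
  derivable (fun t => \adj (M t) i j) x v.
Proof.
move=> H.
have -> : (fun t => \adj (M t) i j) =
    (fun t => (-1) ^+ (j + i) * \det (row' j (col' i (M t)))).
  by apply/funext => t; rewrite mxE.
apply: derivable_cstM; apply: derivable_det => k l.
have -> : (fun t => row' j (col' i (M t)) k l) = (fun t => M t (lift j k) (lift i l)).
  by apply/funext => t; rewrite !mxE.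
exact: H.
Qed.

Lemma derive_reparam {W : normedModType R} (f : V -> W) x e :
  'D_e f x = 'D_1 (fun h : R => f (h *: e + x)) 0.
Proof.
set g := fun h : R => f (h *: e + x).
rewrite /derive.
suff -> : (fun h : R => h^-1 *: ((f \o shift x) (h *: e) - f x)) =
  (fun h : R => h^-1 *: ((g \o shift 0) (h *: 1) - g 0)) by [].
apply: funext => h; rewrite /g /=.
by rewrite [h *: 1]mulr1 addr0 scale0r add0r.
Qed.

Lemma derive_chain {U : normedModType R} (G : U -> R) (lam : V -> U) x e :
  derivable lam x e -> differentiable G (lam x) ->
  'D_e (fun t => G (lam t)) x = 'd G (lam x) ('D_e lam x).
Proof.
move=> dl dG.
set psi := fun h : R => lam (h *: e + x).
have dpsi : differentiable psi 0 by apply/derivable1_diffP; exact: ((derivable1P lam x e).1 dl).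
have p0 : psi 0 = lam x by rewrite /psi scale0r add0r.
have dG' : differentiable G (psi 0) by rewrite p0.
rewrite derive_reparam (derive_reparam lam).
have -> : (fun h : R => G (lam (h *: e + x))) = G \o psi by [].
rewrite deriveE; last exact: differentiable_comp.
rewrite diff_comp // deriveE // p0. by [].
Qed.

End DerGen.


Section LamDer.
Context {R : realType} {nS nA d : nat}.
Variable (P : 'I_nS -> 'I_nA -> 'I_nS -> R) (xi : 'I_nS -> R) (gamma : R).
Hypothesis Pd : forall s a, is_distr (P s a).
Hypothesis xid : is_distr xi.
Hypothesis g01 : 0 < gamma < 1.
Variable (Theta : set 'rV[R]_d) (pi : 'rV[R]_d -> 'I_nS -> 'I_nA -> R) (theta : 'rV[R]_d).
Hypothesis oT : open Theta.
Hypothesis thT : theta \in Theta.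
Hypothesis pid : forall th, th \in Theta -> forall s, is_distr (pi th s).
Hypothesis pidiff : forall th, th \in Theta -> forall s a, differentiable (fun t => pi t s a) th.

Lemma lam_derivable v :
  derivable (fun t => occupancy P xi gamma (pi t)) theta v.
Proof.
have nT : \forall t \near theta, Theta t.
  by move: oT; rewrite openE => /(_ theta); apply; rewrite -in_setE.
apply/derivable_mxP => s a.
pose A t := Amat P gamma (pi t).
pose G t := (\sum_k xi k * ((\det (A t))^-1 * \adj (A t) k s)) * pi t s a.
apply: (@near_eq_derivable _ _ _ G).
  near=> t.
  have tT : t \in Theta by rewrite in_setE; near: t.
  rewrite occ_closed //; last exact: pid.
  rewrite /G /dvec mxE; congr (_ * _); apply: eq_bigr => k _.
  by rewrite /invmx Amat_unit //; [rewrite !mxE | exact: pid].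
have dpi : forall i j, derivable (fun t => pi t i j) theta v.
  by move=> i j; apply: diff_derivable; apply: pidiff.
have dA : forall i j, derivable (fun t => A t i j) theta v.
  move=> i j.
  have -> : (fun t => A t i j) =
      (fun t => (1%:M : 'M[R]_nS) i j - gamma * \sum_b pi t i b * P i b j).
    by apply/funext => t; rewrite /A /Amat !mxE.
  apply: (@derivableB _ _ _ (fun _ => (1%:M : 'M[R]_nS) i j)).
    exact: derivable_cst.
  apply: derivable_cstM; apply: derivable_bsum => b.
  exact: (@derivableM _ _ (fun t => pi t i b) (fun _ => P i b j) _ _ (dpi i b) (derivable_cst _ _ _)).
apply: (@derivableM _ _ (fun t => \sum_k xi k * ((\det (A t))^-1 * \adj (A t) k s))
          (fun t => pi t s a)); last exact: dpi.
apply: derivable_bsum => k; apply: derivable_cstM.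
apply: (@derivableM _ _ (fun t => (\det (A t))^-1) (fun t => \adj (A t) k s)).
  apply: derivableV; last exact: derivable_det.
  have := Amat_unit P gamma Pd g01 (pi theta) (pid theta thT).
  by rewrite unitmxE unitfE.
exact: derivable_adj.
Unshelve. all: by end_near.
Qed.

End LamDer.


Section MainAux.
Context {R : realType} {nS nA d : nat}.
Variable J : 'I_d -> 'M[R]_(nS, nA).

Definition Jx (x : 'rV[R]_d) : 'M[R]_(nS, nA) := \sum_i x 0 i *: J i.
Definition Gr (v : 'M[R]_(nS, nA)) : 'rV[R]_d := \row_i mxdot v (J i).

Lemma GrJx v x : rvdot (Gr v) x = mxdot v (Jx x).
Proof.
rewrite /rvdot /Jx mxdot_sumr; apply: eq_bigr => i _.
by rewrite mxE mxdotZr mulrC.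
Qed.

Lemma JxD x y : Jx (x + y) = Jx x + Jx y.
Proof.
rewrite /Jx -big_split; apply: eq_bigr => i _; by rewrite mxE scalerDl.
Qed.

Lemma GrB v w : Gr v - Gr w = Gr (v - w).
Proof. by apply/matrixP => i j; rewrite !mxE mxdotBl. Qed.

Lemma sq_le (x y : R) : `|x| <= y -> x ^+ 2 <= y ^+ 2.
Proof.
move=> h; have h0 := normr_ge0 x.
rewrite -[x ^+ 2]ger0_norm ?sqr_ge0 // normrX; nra.
Qed.

Lemma sum_sq_le (c : 'I_d -> R) : (\sum_i c i) ^+ 2 <= d%:R * \sum_i c i ^+ 2.
Proof.
rewrite expr2 big_distrlr /=.
apply: (@le_trans _ _ (\sum_i \sum_j (c i ^+ 2 + c j ^+ 2) / 2)).
  apply: ler_sum => i _; apply: ler_sum => j _.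
  have := sqr_ge0 (c i - c j); lra.
rewrite (eq_bigr (fun i => (d%:R * c i ^+ 2 + \sum_j c j ^+ 2) / 2)).
  rewrite -mulr_suml big_split /= -mulr_sumr sumr_const card_ord.
  rewrite -[_ *+ d]mulr_natl; lra.
move=> i _; rewrite -mulr_suml big_split /= sumr_const card_ord.
by rewrite -[_ *+ d]mulr_natl.
Qed.

Lemma l1_sum (I : finType) (f : I -> 'M[R]_(nS, nA)) :
  l1norm (\sum_i f i) <= \sum_i l1norm (f i).
Proof.
rewrite /l1norm [in X in _ <= X]exchange_big /=; apply: ler_sum => s _.
rewrite [in X in _ <= X]exchange_big /=; apply: ler_sum => a _.
rewrite summxE; exact: ler_norm_sum.
Qed.

Lemma Jx_bound x :
  l1norm (Jx x) ^+ 2 <= d%:R * (\sum_i l1norm (J i) ^+ 2) * sqnorm2 x.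
Proof.
set A2 := \sum_i l1norm (J i) ^+ 2.
have hA : forall i, l1norm (J i) ^+ 2 <= A2.
  by move=> i; rewrite /A2 (bigD1 i) //= lerDl sumr_ge0 // => j _; rewrite sqr_ge0.
apply: (@le_trans _ _ ((\sum_i `|x 0 i| * l1norm (J i)) ^+ 2)).
  apply: sq_le; rewrite ger0_norm ?l1_ge0 //.
  rewrite /Jx; apply: le_trans (l1_sum _ _) _; apply: ler_sum => i _; by rewrite l1Z.
apply: le_trans (sum_sq_le _) _.
rewrite -mulrA ler_wpM2l //; rewrite /sqnorm2 /rvdot mulr_sumr; apply: ler_sum => i _.
rewrite exprMn (real_normK (num_real _)) -expr2 mulrC.
by rewrite ler_wpM2r ?sqr_ge0.
Qed.

Lemma Gr_bound v : sqnorm2 (Gr v) <= linfnorm v ^+ 2 * \sum_i l1norm (J i) ^+ 2.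
Proof.
rewrite /sqnorm2 /rvdot mulr_sumr; apply: ler_sum => i _.
rewrite mxE -expr2 -exprMn; apply: sq_le.
exact: mxdot_le.
Qed.

End MainAux.

Lemma mx_rearr {R : realType} {m n : nat} (a b c : 'M[R]_(m, n)) (k : R) :
  a + k *: (b + c) = k *: c + (a + k *: b).
Proof. by apply/matrixP => i j; rewrite !mxE; ring. Qed.

Lemma mx_rearr2 {R : realType} {m n : nat} (a b : 'M[R]_(m, n)) (k : R) :
  a + k *: b - a = k *: b.
Proof. by apply/matrixP => i j; rewrite !mxE; ring. Qed.

Lemma sq_le_rev {R : realType} (a b : R) : 0 <= a -> 0 <= b -> a ^+ 2 <= b ^+ 2 -> a <= b.
Proof. move=> ha hb h; nra. Qed.


Theorem mainTheorem3 (R : realType) (nS nA d : nat)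
  (P : 'I_nS -> 'I_nA -> 'I_nS -> R) (xi : 'I_nS -> R) (gamma : R)
  (Theta : set 'rV[R]_d) (pi : 'rV[R]_d -> 'I_nS -> 'I_nA -> R)
  (F : 'M[R]_(nS, nA) -> R) (lF LF lFs C : R) (theta : 'rV[R]_d)
  (xstar : R -> 'rV[R]_d) :
  (* finite MDP *)
  (forall s a, is_distr (P s a)) -> is_distr xi -> 0 < gamma < 1 ->
  (* parametrized policies on an open parameter set Theta *)
  open Theta -> theta \in Theta ->
  (forall th, th \in Theta -> forall s, is_distr (pi th s)) ->
  (* (i) *)
  concave_fun F -> (forall l, differentiable F l) ->
  (forall l, l1norm l <= 2 / (1 - gamma) -> linfnorm (gradM F l) <= lF) ->
  (* (ii) *)
  (forall l l', linfnorm (gradM F l - gradM F l') <= LF * l1norm (l - l')) ->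
  (* (iii) *)
  (forall z z', linfnorm z <= 2 * lF -> linfnorm z' <= 2 * lF ->
     (-oo < fenchel_dual F z)%E -> (-oo < fenchel_dual F z')%E ->
     (`|fenchel_dual F z - fenchel_dual F z'| <= (lFs * linfnorm (z - z'))%:E)%E) ->
  (* (iv) *)
  (forall th, th \in Theta -> forall s a, differentiable (fun t => pi t s a) th) ->
  (forall th, th \in Theta -> forall s,
     opnorm_inf2_le (fun a => grad (fun t => pi t s a) th) C) ->
  (* x*(delta) = argmax_x min_{||z||_inf <= lF} Phi_delta(x, z) *)
  let lam t := occupancy P xi gamma (pi t) in
  let V t z := mxdot z (lam t) in
  let Phi (delta : R) (x : 'rV[R]_d) (z : 'M[R]_(nS, nA)) : \bar R :=
    ((V theta z + delta * rvdot (grad (fun t => V t z) theta) x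
      - delta / 2 * sqnorm2 x)%:E - fenchel_dual F z)%E in
  let psi delta x := ereal_inf [set Phi delta x z | z in [set z | linfnorm z <= lF]] in
  (forall delta, 0 < delta < 1 -> forall x, (psi delta x <= psi delta (xstar delta))%E) ->
  (* ||x*(delta) - grad R(pi_theta)||^2 = O(delta^2) as delta -> 0+ *)
  exists K eta, 0 < K /\ 0 < eta /\
    forall delta, 0 < delta < eta ->
      sqnorm2 (xstar delta - grad (fun t => F (lam t)) theta) <= K * delta ^+ 2.
Proof.
move=> Pd xid g01 oT thT pid cF dF hi hii hiii pidiff hC lam V Phi psi hx.
pose e (i : 'I_d) : 'rV[R]_d := delta_mx 0 i.
pose J i := 'D_(e i) lam theta.
have dl : forall i, derivable lam theta (e i).
  move=> i; exact: (lam_derivable _ _ _ Pd xid g01 _ _ _ oT thT pid pidiff (e i)).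
set g := gradM F (lam theta).
have F1 z : grad (fun t => V t z) theta = Gr J z.
  apply/matrixP => i0 i; rewrite !mxE.
  have dls : forall s a, derivable (fun t => lam t s a) theta (e i).
    by move=> s a; move/derivable_mxP: (dl i); apply.
  have H : is_derive theta (e i) (fun t => \sum_s \sum_a z s a * lam t s a)
             (\sum_s \sum_a z s a * J i s a).
    apply: is_derive_bsum => s; apply: is_derive_bsum => a.
    apply: is_derive_cstM; rewrite /J derive_mx // mxE.
    exact: derivableP.
  have -> : (fun t => V t z) = (fun t => \sum_s \sum_a z s a * lam t s a) by [].
  by rewrite derive_val.
have F2 : grad (fun t => F (lam t)) theta = Gr J g.
  apply/matrixP => i0 i; rewrite !mxE.
  rewrite (derive_chain _ _ _ _ (dl i) (dF _)) gradM_dot //.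
set x0 := Gr J g.
pose Gf (dt : R) (x : 'rV[R]_d) := F (lam theta + dt *: Jx J x) - dt / 2 * sqnorm2 x.
have Phi_eq : forall dt x z, Phi dt x z =
   ((mxdot z (lam theta + dt *: Jx J x) - dt / 2 * sqnorm2 x)%:E - fenchel_dual F z)%E.
  by move=> dt x z; rewrite /Phi F1 GrJx mxdotDr mxdotZr.
have lower : forall dt x, ((Gf dt x)%:E <= psi dt x)%E.
  move=> dt x; apply: le_ereal_inf_tmp => _ [z _ <-]; rewrite Phi_eq.
  have := dual_le F z (lam theta + dt *: Jx J x).
  case: (fenchel_dual F z) => [r| |] //= hr.
    rewrite lee_fin in hr; rewrite -EFinB lee_fin /Gf; rewrite mxdotC in hr; lra.
  by rewrite leey.
have upper : forall dt x m, l1norm m <= 2 / (1 - gamma) ->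
   (psi dt x <= (F m + mxdot (gradM F m) (lam theta + dt *: Jx J x - m)
                 - dt / 2 * sqnorm2 x)%:E)%E.
  move=> dt x m hm; apply: ge_ereal_inf; exists (Phi dt x (gradM F m)).
    by exists (gradM F m) => //; exact: hi.
  rewrite Phi_eq dual_eq // -EFinB lee_fin mxdotBr (mxdotC m); lra.
have g0 : 0 < 1 - gamma by case/andP: g01 => _ h; rewrite subr_gt0.
set c := (1 - gamma)^-1.
have c0 : 0 < c by rewrite invr_gt0.
have lam1 : l1norm (lam theta) = c.
  exact: (occ_l1 P xi gamma Pd xid g01 (pi theta) (pid theta thT)).
have c2 : 2 / (1 - gamma) = 2 * c by [].
set L := `|LF|.
have Lge : 0 <= L by exact: normr_ge0.
set A2 := \sum_i l1norm (J i) ^+ 2.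
have A2ge : 0 <= A2 by apply: sumr_ge0 => i _; rewrite sqr_ge0.
set KJ := d%:R * A2.
have KJge : 0 <= KJ by rewrite mulr_ge0.
have JB : forall x, l1norm (Jx J x) ^+ 2 <= KJ * sqnorm2 x.
  by move=> x; rewrite /KJ /A2; exact: Jx_bound.
have sx0 := sq_ge0 x0.
set B0 := 2 * L * KJ * sqnorm2 x0.
have B0ge : 0 <= B0 by rewrite /B0 !mulr_ge0.
set B1 := 2 * B0 + 2 * sqnorm2 x0.
have B1ge : 0 <= B1 by rewrite /B1; lra.
set w := (1 - gamma) ^+ 2.
have w0 : 0 < w by rewrite /w exprn_gt0.
have wc : w * c ^+ 2 = 1.
  by rewrite /w /c -exprMn divff ?expr1n // gt_eqF.
set Q := 4 * (1 + L * KJ) * (1 + KJ * B1 * w).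
have LK0 : 0 <= L * KJ by rewrite mulr_ge0.
have KBw0 : 0 <= KJ * B1 * w by rewrite !mulr_ge0 // ltW.
have Q0 : 0 < Q by rewrite /Q !mulr_gt0 //; lra.
exists (2 * A2 * L ^+ 2 * KJ * B1 + 1), (1 / Q); split.
  have : 0 <= 2 * A2 * L ^+ 2 * KJ * B1 by rewrite !mulr_ge0 // sqr_ge0.
  lra.
split; first by rewrite divr_gt0.
move=> dt /andP[dt0 dtQ].
have hQ : dt * Q < 1 by rewrite -ltr_pdivlMr.
have cond1 : L * KJ * dt <= 1 / 4.
  have : (1 + L * KJ) * dt * 4 <= dt * Q.
    rewrite /Q; have h1 : 0 <= KJ * B1 * w by rewrite !mulr_ge0 // ltW.
    have h2 : 0 <= (1 + L * KJ) * dt by rewrite mulr_ge0 // ?ltW //; nra.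
    nra.
  nra.
have cond2 : dt * (KJ * B1 * w) <= 1.
  have : dt * (1 + KJ * B1 * w) * 4 <= dt * Q.
    rewrite /Q; have h1 : 0 <= L * KJ by rewrite mulr_ge0.
    have h2 : 0 <= dt * (1 + KJ * B1 * w) by rewrite mulr_ge0 // ?ltW //; nra.
    nra.
  have : 0 <= KJ * B1 * w by rewrite !mulr_ge0 // ltW.
  nra.
have dt1 : dt < 1.
  have : dt * 4 <= dt * Q.
    rewrite /Q; have h1 : 0 <= L * KJ by rewrite mulr_ge0.
    have h3 : 0 <= KJ * B1 * w by rewrite !mulr_ge0 // ltW.
    have h4 : 1 <= (1 + L * KJ) * (1 + KJ * B1 * w) by nra.
    have hQ4 : 4 <= 4 * ((1 + L * KJ) * (1 + KJ * B1 * w)).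
      by rewrite -[X in X <= _]mulr1 ler_wpM2l.
    rewrite -mulrA.
    by apply: ler_wpM2l; [exact: ltW|exact: hQ4].
  lra.
have hx1 := hx dt (introT andP (conj dt0 dt1)).
set xs := xstar dt.
rewrite F2 -/x0.
have hml : l1norm (lam theta) <= 2 / (1 - gamma) by rewrite lam1 c2; lra.
have s1 : Gf dt x0 <= F (lam theta) + dt * rvdot x0 xs - dt / 2 * sqnorm2 xs.
  have h1 := lower dt x0; have h2 := hx1 x0; have h3 := upper dt xs (lam theta) hml.
  move: (le_trans h1 (le_trans h2 h3)); rewrite lee_fin mx_rearr2 mxdotZr -GrJx.
  done.
have s1' : F (lam theta) + dt * sqnorm2 x0 - L * (dt ^+ 2 * (KJ * sqnorm2 x0))
           - dt / 2 * sqnorm2 x0 <= Gf dt x0.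
  have := lipschitz_lower F LF (lam theta) (dt *: Jx J x0) dF hii.
  rewrite mxdotZr -GrJx l1Z exprMn (real_normK (num_real _)) -/g -/x0 -/L.
  rewrite (addrC (dt *: Jx J x0)).
  move=> h; rewrite /Gf.
  have := JB x0 => hb.
  have : dt ^+ 2 * l1norm (Jx J x0) ^+ 2 <= dt ^+ 2 * (KJ * sqnorm2 x0).
    by rewrite ler_wpM2l // sqr_ge0.
  move=> /(ler_wpM2l Lge) hh.
  rewrite /sqnorm2 in h hh *; lra.
have dxs : sqnorm2 (xs - x0) <= B0.
  rewrite sqB (rvdotC xs x0).
  have : dt * (sqnorm2 xs - 2 * rvdot x0 xs + sqnorm2 x0) <=
         dt * (2 * L * dt * KJ * sqnorm2 x0).
    move: s1 s1'; rewrite /sqnorm2; lra.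
  rewrite ler_pM2l // => h; apply: le_trans h _.
  rewrite /B0.
  have : 0 <= L * KJ * sqnorm2 x0 by rewrite !mulr_ge0.
  nra.
have bxs : sqnorm2 xs <= B1.
  have -> : xs = (xs - x0) + x0 by rewrite subrK.
  apply: le_trans (sqD_le _ _) _; rewrite /B1; lra.
have l1xs : dt * l1norm (Jx J xs) <= c.
  apply: sq_le_rev; first by apply: mulr_ge0; [exact: ltW|exact: l1_ge0].
    exact: ltW.
  have hb := JB xs.
  have h1 : l1norm (Jx J xs) ^+ 2 <= KJ * B1.
    apply: le_trans hb _; rewrite ler_wpM2l //.
  have h2 : dt * (KJ * B1) <= c ^+ 2.
    have : dt * (KJ * B1 * w) * c ^+ 2 <= c ^+ 2.
      by rewrite -[leRHS]mul1r ler_wpM2r ?sqr_ge0.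
    have -> : dt * (KJ * B1 * w) * c ^+ 2 = dt * (KJ * B1) * (w * c ^+ 2) by ring.
    by rewrite wc mulr1.
  rewrite exprMn.
  have h3 : 0 <= l1norm (Jx J xs) ^+ 2 by rewrite sqr_ge0.
  have h4 : dt ^+ 2 <= dt by rewrite expr2 ler_piMl // ltW.
  have h5 : 0 <= KJ * B1 by rewrite mulr_ge0.
  nra.
set mu := lam theta + dt *: Jx J xs.
have hmu : l1norm mu <= 2 / (1 - gamma).
  rewrite c2; apply: le_trans (l1D _ _) _; rewrite lam1 l1Z ger0_norm; [lra | exact: ltW].
set gm := gradM F mu.
set wv := Gr J gm.
set u := wv - xs.
have hwv : wv = xs + u by rewrite /u addrC subrK.
have s3 : Gf dt wv <= F mu - dt / 2 * sqnorm2 xs.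
  have h1 := lower dt wv; have h2 := hx1 wv; have h3 := upper dt xs mu hmu.
  move: (le_trans h1 (le_trans h2 h3)); rewrite lee_fin -/mu subrr mxdot0r addr0.
  done.
have s3' : F mu + dt * rvdot wv u - L * (dt ^+ 2 * (KJ * sqnorm2 u))
           - dt / 2 * sqnorm2 wv <= Gf dt wv.
  have := lipschitz_lower F LF mu (dt *: Jx J u) dF hii.
  rewrite mxdotZr -GrJx l1Z exprMn (real_normK (num_real _)) -/gm -/wv -/L.
  have -> : dt *: Jx J u + mu = lam theta + dt *: Jx J wv.
    by rewrite hwv JxD /mu mx_rearr.
  move=> h; rewrite /Gf.
  have := JB u => hb.
  have : dt ^+ 2 * l1norm (Jx J u) ^+ 2 <= dt ^+ 2 * (KJ * sqnorm2 u).
    by rewrite ler_wpM2l // sqr_ge0.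
  move=> /(ler_wpM2l Lge) hh.
  lra.
have su0 : sqnorm2 u <= 0.
  move: s3 s3'; rewrite hwv sqD rvdotDl -/(sqnorm2 u) => s3 s3'.
  have hsu := sq_ge0 u.
  have h1 : L * KJ * dt * (dt * sqnorm2 u) <= 1 / 4 * (dt * sqnorm2 u).
    by rewrite ler_wpM2r // mulr_ge0 // ltW.
  have h2 : dt * sqnorm2 u <= 0 by nra.
  nra.
have su : sqnorm2 u = 0 by apply/eqP; rewrite eq_le su0 sq_ge0.
have -> : xs - x0 = (wv - x0) + - u by rewrite /u; apply/matrixP => i j; rewrite !mxE; ring.
apply: le_trans (sqD_le _ _) _; rewrite sqN su mulr0 addr0.
rewrite /x0 /wv GrB.
apply: le_trans (ler_wpM2l _ (Gr_bound _ _)) _; first by [].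
have hlin : linfnorm (gm - g) <= L * (dt * l1norm (Jx J xs)).
  apply: le_trans (hii _ _) _.
  rewrite /mu mx_rearr2 l1Z (ger0_norm (ltW dt0)).
  apply: ler_wpM2r; [apply: mulr_ge0; [exact: ltW|exact: l1_ge0] | exact: real_ler_norm (num_real _)].
have hlin2 : linfnorm (gm - g) ^+ 2 <= L ^+ 2 * (dt ^+ 2 * (KJ * B1)).
  apply: (@le_trans _ _ ((L * (dt * l1norm (Jx J xs))) ^+ 2)).
    by apply: sq_le; rewrite ger0_norm ?linf_ge0.
  rewrite exprMn; apply: ler_wpM2l; first exact: sqr_ge0.
  rewrite exprMn; apply: ler_wpM2l; first exact: sqr_ge0.
  apply: le_trans (JB xs) _; apply: ler_wpM2l => //.
have := linf_ge0 (gm - g) => hl0.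
rewrite -/A2.
have hA : 2 * (linfnorm (gm - g) ^+ 2 * A2) <= 2 * (L ^+ 2 * (dt ^+ 2 * (KJ * B1)) * A2).
  by rewrite ler_wpM2l // ler_wpM2r.
apply: le_trans hA _.
have : 0 <= dt ^+ 2 by rewrite sqr_ge0.
move=> hd; have : 0 <= dt ^+ 2 * 1 by rewrite mulr1.
have e1 : 2 * (L ^+ 2 * (dt ^+ 2 * (KJ * B1)) * A2) = (2 * A2 * L ^+ 2 * KJ * B1) * dt ^+ 2 by ring.
rewrite e1; nra.
Qed.
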